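(* Let $\mathcal{A}$ be an abelian category. (1) Let $M$ be a weak duo object of $\mathcal{A}$ having SSIP, and let $(N_i)_{i\in I}$ be a family of objects of $\mathcal{A}$ having a product. Then $\prod_{i\in I} N_i$ is strongly $M$-Rickart if and only if $N_i$ is strongly $M$-Rickart for every $i\in I$. (2) Let $(M_i)_{i\in I}$ be a family of objects of $\mathcal{A}$ having a coproduct, and let $N$ be a weak duo object of $\mathcal{A}$ having SSSP. Then $N$ is dual strongly $\bigoplus_{i\in I} M_i$-Rickart if and only if $N$ is dual strongly $M_i$-Rickart for every $i\in I$.
   Context: An object $M$ has the strong summand intersection property (SSIP) if the intersection of any family of direct summands of $M$ is a direct summand of $M$; it has the strong summand sum property (SSSP) if the sum of any family of direct summands of $M$ is a direct summand of $M$. A morphism $f:X\to Y$ is a section if $f'f=1_X$ for some $f'$, a retraction if $ff'=1_Y$ for some $f'$. A monomorphism $k:K\to X$ is fully invariant if for every $h:X\to X$ there is $\alpha:K\to K$ with $hk=k\alpha$; an epimorphism $c:X\to C$ is fully coinvariant if for every $h:X\to X$ there is $\gamma:C\to C$ with $ch=\gamma c$. An object is weak duo if every section into it is fully invariant (equivalently every retraction from it is fully coinvariant). $N$ is strongly $M$-Rickart if the kernel of every morphism $f:M\to N$ is a fully invariant section; $N$ is dual strongly $M$-Rickart if the cokernel of every morphism $f:M\to N$ is a fully coinvariant retraction (equivalently its image is a fully invariant section of $N$). *)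

(* Defs.v *)
From HB Require Import structures.
From mathcomp Require Import all_boot all_algebra.
Set Implicit Arguments. Unset Strict Implicit. Unset Printing Implicit Defensive.
Import GRing.Theory.
Local Open Scope ring_scope.

Record precategory := PreCategory {
  Ob :> Type;
  Mor : Ob -> Ob -> zmodType;
  comp : forall A B C : Ob, Mor B C -> Mor A B -> Mor A C;
  idm : forall A : Ob, Mor A A;
  compA : forall A B C D (h : Mor C D) (g : Mor B C) (f : Mor A B),
      comp h (comp g f) = comp (comp h g) f;
  comp1m : forall A B (f : Mor A B), comp (idm B) f = f;
  compm1 : forall A B (f : Mor A B), comp f (idm A) = f;
  compDl : forall A B C (g1 g2 : Mor B C) (f : Mor A B),
      comp (g1 + g2) f = comp g1 f + comp g2 f;
  compDr : forall A B C (g : Mor B C) (f1 f2 : Mor A B),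
      comp g (f1 + f2) = comp g f1 + comp g f2
}.
Arguments comp {p A B C}.
Arguments idm {p}.

Section Notions.
Variable C : precategory.

Definition mono (A B : C) (f : Mor A B) : Prop :=
  forall X (g h : Mor X A), comp f g = comp f h -> g = h.
Definition epi (A B : C) (f : Mor A B) : Prop :=
  forall Y (g h : Mor B Y), comp g f = comp h f -> g = h.

Definition is_kernel (A B : C) (f : Mor A B) (K : C) (k : Mor K A) : Prop :=
  comp f k = 0 /\
  forall X (g : Mor X A), comp f g = 0 -> exists! u : Mor X K, comp k u = g.
Definition is_cokernel (A B : C) (f : Mor A B) (Q : C) (c : Mor B Q) : Prop :=
  comp c f = 0 /\
  forall Y (g : Mor B Y), comp g f = 0 -> exists! u : Mor Q Y, comp u c = g.

Definition is_zero_object (Z : C) : Prop :=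
  forall X : C, (forall f g : Mor X Z, f = g) /\ (forall f g : Mor Z X, f = g).

Definition is_biproduct (A B S : C) (i1 : Mor A S) (i2 : Mor B S)
    (p1 : Mor S A) (p2 : Mor S B) : Prop :=
  [/\ comp p1 i1 = idm A, comp p2 i2 = idm B, comp p1 i2 = 0, comp p2 i1 = 0
    & comp i1 p1 + comp i2 p2 = idm S].

Definition is_abelian : Prop :=
  (exists Z : C, is_zero_object Z) /\
  [/\ (forall A B : C, exists S (i1 : Mor A S) (i2 : Mor B S) p1 p2,
          is_biproduct i1 i2 p1 p2),
      (forall (A B : C) (f : Mor A B), exists K (k : Mor K A), is_kernel f k),
      (forall (A B : C) (f : Mor A B), exists Q (c : Mor B Q), is_cokernel f c),
      (forall (A B : C) (f : Mor A B), mono f ->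
          exists D (g : Mor B D), is_kernel g f)
    & (forall (A B : C) (f : Mor A B), epi f ->
          exists D (g : Mor D A), is_cokernel g f)].

Definition section (X Y : C) (f : Mor X Y) : Prop :=
  exists f' : Mor Y X, comp f' f = idm X.
Definition retraction (X Y : C) (f : Mor X Y) : Prop :=
  exists f' : Mor Y X, comp f f' = idm Y.

Definition fully_invariant (K X : C) (k : Mor K X) : Prop :=
  mono k /\ forall h : Mor X X, exists a : Mor K K, comp h k = comp k a.
Definition fully_coinvariant (X Q : C) (c : Mor X Q) : Prop :=
  epi c /\ forall h : Mor X X, exists g : Mor Q Q, comp c h = comp g c.

Definition weak_duo (M : C) : Prop :=
  forall A (s : Mor A M), section s -> fully_invariant s.

Definition factors_through (A T X : C) (g : Mor A X) (t : Mor T X) : Prop :=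
  exists u : Mor A T, comp t u = g.

Definition is_intersection (M : C) (J : Type) (A : J -> C)
    (s : forall j, Mor (A j) M) (K : C) (k : Mor K M) : Prop :=
  [/\ mono k, forall j, factors_through k (s j)
    & forall T (t : Mor T M), mono t ->
        (forall j, factors_through t (s j)) -> factors_through t k].

Definition is_sum (M : C) (J : Type) (A : J -> C)
    (s : forall j, Mor (A j) M) (K : C) (k : Mor K M) : Prop :=
  [/\ mono k, forall j, factors_through (s j) k
    & forall T (t : Mor T M), mono t ->
        (forall j, factors_through (s j) t) -> factors_through k t].

(* direct summands of M = sections into M *)
Definition SSIP (M : C) : Prop :=
  forall (J : Type) (A : J -> C) (s : forall j, Mor (A j) M),
    (forall j, section (s j)) ->
    forall K (k : Mor K M), is_intersection s k -> section k.
Definition SSSP (M : C) : Prop :=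
  forall (J : Type) (A : J -> C) (s : forall j, Mor (A j) M),
    (forall j, section (s j)) ->
    forall K (k : Mor K M), is_sum s k -> section k.

Definition is_product (I : Type) (N : I -> C) (P : C)
    (p : forall i, Mor P (N i)) : Prop :=
  forall X (f : forall i, Mor X (N i)),
    exists! u : Mor X P, forall i, comp (p i) u = f i.
Definition is_coproduct (I : Type) (M : I -> C) (S : C)
    (e : forall i, Mor (M i) S) : Prop :=
  forall Y (f : forall i, Mor (M i) Y),
    exists! u : Mor S Y, forall i, comp u (e i) = f i.

(* N is strongly M-Rickart *)
Definition strongly_rickart (M N : C) : Prop :=
  forall (f : Mor M N) K (k : Mor K M),
    is_kernel f k -> section k /\ fully_invariant k.
(* N is dual strongly M-Rickart *)
Definition dual_strongly_rickart (M N : C) : Prop :=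
  forall (f : Mor M N) Q (c : Mor N Q),
    is_cokernel f c -> retraction c /\ fully_coinvariant c.

End Notions.

(* Main.v *)
Require Import Defs.
From mathcomp Require Import ssreflect ssrfun ssrbool eqtype ssralg.
From Stdlib Require Import ClassicalEpsilon ProofIrrelevance.
Import GRing.Theory.
Local Open Scope ring_scope.
Local Notation comp := Defs.comp.
Local Notation compA := Defs.compA.
Local Notation comp1m := Defs.comp1m.
Local Notation compm1 := Defs.compm1.
Local Notation compDl := Defs.compDl.
Local Notation compDr := Defs.compDr.

Lemma comp0m (C : precategory) (A B D : C) (f : Mor A B) :
  comp (0 : Mor B D) f = 0.
Proof.
have H := compDl (0 : Mor B D) 0 f. rewrite addr0 in H.
apply: (addrI (comp (0 : Mor B D) f)); by rewrite addr0 -H.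
Qed.

Lemma compm0 (C : precategory) (A B D : C) (g : Mor B D) :
  comp g (0 : Mor A B) = 0.
Proof.
have H := compDr g (0 : Mor A B) 0. rewrite addr0 in H.
apply: (addrI (comp g (0 : Mor A B))); by rewrite addr0 -H.
Qed.

Lemma compBl (C : precategory) (A B D : C) (g1 g2 : Mor B D) (f : Mor A B) :
  comp (g1 - g2) f = comp g1 f - comp g2 f.
Proof.
have H := compDl (g1 - g2) g2 f. rewrite subrK in H. by rewrite H addrK.
Qed.

Lemma compBr (C : precategory) (A B D : C) (g : Mor B D) (f1 f2 : Mor A B) :
  comp g (f1 - f2) = comp g f1 - comp g f2.
Proof.
have H := compDr g (f1 - f2) f2. rewrite subrK in H. by rewrite H addrK.
Qed.

Lemma kernel_mono (C : precategory) (A B K : C) (f : Mor A B) (k : Mor K A) :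
  is_kernel f k -> mono k.
Proof.
move=> [fk0 Hk] X g h Hgh.
have H0 : comp f (comp k g) = 0 by rewrite compA fk0 comp0m.
have [u [_ Hu]] := Hk X _ H0.
by rewrite -(Hu g erefl) -(Hu h (esym Hgh)).
Qed.

Lemma cokernel_epi (C : precategory) (A B Q : C) (f : Mor A B) (c : Mor B Q) :
  is_cokernel f c -> epi c.
Proof.
move=> [cf0 Hc] Y g h Hgh.
have H0 : comp (comp g c) f = 0 by rewrite -compA cf0 compm0.
have [u [_ Hu]] := Hc Y _ H0.
by rewrite -(Hu g erefl) -(Hu h (esym Hgh)).
Qed.

Lemma part1 (C : precategory) (HC : is_abelian C) (M : C) (I : Type)
  (N : I -> C) (P : C) (p : forall i, Mor P (N i)) :
  weak_duo M -> SSIP M -> is_product p ->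
  (strongly_rickart M P <-> forall i, strongly_rickart M (N i)).
Proof.
move=> wd ssip prod; split.
- move=> SR i f K k kerk.
  pose g := fun j => match excluded_middle_informative (i = j) with
     | left e => match e in _ = j' return Mor (N i) (N j') with
                 | erefl => idm (N i) end
     | right _ => 0 end.
  have [u [Hu _]] := prod _ g.
  have pu : comp (p i) u = idm (N i).
    rewrite Hu /g. case: excluded_middle_informative => [e|n]; last by [].
    by rewrite (proof_irrelevance _ e erefl).
  apply: (SR (comp u f)).
  case: kerk => fk0 Hk; split; first by rewrite -compA fk0 compm0.
  move=> X g' H. apply: Hk.
  by rewrite -(comp1m (comp f g')) -pu -compA (compA u f g') H compm0.
- move=> SR f K k kerk.
  have Hker : forall i, exists Ki (ki : Mor Ki M), is_kernel (comp (p i) f) ki.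
    move=> i; case: HC => _ [_ Hk _ _ _]; exact: Hk.
  pose s1 i := constructive_indefinite_description _ (Hker i).
  pose Ki i := proj1_sig (s1 i).
  pose s2 i := constructive_indefinite_description _ (proj2_sig (s1 i)).
  pose ki i : Mor (Ki i) M := proj1_sig (s2 i).
  have kiP i : is_kernel (comp (p i) f) (ki i) := proj2_sig (s2 i).
  have Hs : section k.
    apply: (ssip I Ki ki).
    + move=> i; exact: (SR i _ _ _ (kiP i)).1.
    + split.
      * exact: (@kernel_mono _ _ _ _ _ _ kerk).
      * move=> j. have H0 : comp (comp (p j) f) k = 0.
          by rewrite -compA kerk.1 compm0.
        have [u [Hu _]] := (kiP j).2 _ _ H0. by exists u.
      * move=> T t tmono Ht.
        have ft0 : comp f t = 0.
          have [u [_ uniq]] := prod T (fun i => 0).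
          rewrite -(uniq (comp f t)); last first.
            move=> j. have [v Hv] := Ht j.
            by rewrite -Hv compA compA (kiP j).1 comp0m.
          apply: uniq => j; exact: compm0.
        have [u [Hu _]] := kerk.2 _ _ ft0. by exists u.
  split; first exact: Hs.
  exact: wd _ k Hs.
Qed.

Lemma part2 (C : precategory) (HC : is_abelian C) (I : Type) (M : I -> C)
  (S : C) (e : forall i, Mor (M i) S) (N : C) :
  is_coproduct e -> weak_duo N -> SSSP N ->
  (dual_strongly_rickart S N <-> forall i, dual_strongly_rickart (M i) N).
Proof.
move=> cop wd sssp; split.
- move=> DR i f Q c cokc.
  pose g := fun j => match excluded_middle_informative (j = i) with
     | left e => match e in _ = j' return Mor (M j) (M j') with
                 | erefl => idm (M j) end
     | right _ => 0 end.
  have [r [Hr _]] := cop _ g.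
  have re : comp r (e i) = idm (M i).
    rewrite Hr /g. case: excluded_middle_informative => [e'|n]; last by [].
    by rewrite (proof_irrelevance _ e' erefl).
  apply: (DR (comp f r)).
  case: cokc => cf0 Hc; split; first by rewrite compA cf0 comp0m.
  move=> Y g' H; apply: Hc.
  by rewrite -(compm1 (comp g' f)) -re (compA (comp g' f) r (e i))
     -(compA g' f r) H comp0m.
- move=> DR f Q c cokc.
  case: HC => _ [_ Hker Hcok Hmk Hek].
  have cepi := @cokernel_epi _ _ _ _ _ _ cokc.
  have [K [k kerk]] := Hker _ _ c.
  have cokk : is_cokernel k c.
    have [D [g cokg]] := Hek _ _ c cepi.
    split; first exact: kerk.1.
    move=> Y y yk0.
    have [v [Hv _]] := kerk.2 D g cokg.1.
    apply: cokg.2. by rewrite -Hv compA yk0 comp0m.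
  have H : forall i, exists Ai (ai : Mor Ai N),
      section ai /\ comp c ai = 0 /\ exists vi : Mor (M i) Ai, comp ai vi = comp f (e i).
    move=> i.
    have [Qi [ci cokci]] := Hcok _ _ (comp f (e i)).
    have [[r cr] _] := DR i _ _ _ cokci.
    have [Ai [ai kerai]] := Hker _ _ ci.
    exists Ai, ai; split; [|split].
    + have H0 : comp ci (idm N - comp r ci) = 0.
        by rewrite compBr compm1 compA cr comp1m subrr.
      have [s [Hs _]] := kerai.2 _ _ H0.
      exists s. apply: (@kernel_mono _ _ _ _ _ _ kerai).
      by rewrite compA Hs compBl comp1m -compA kerai.1 compm0 subr0 compm1.
    + have H0 : comp c (comp f (e i)) = 0 by rewrite compA cokc.1 comp0m.
      have [w [Hw _]] := cokci.2 _ _ H0.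
      by rewrite -Hw -compA kerai.1 compm0.
    + have [v [Hv _]] := kerai.2 _ _ cokci.1. by exists v.
  pose s1 i := constructive_indefinite_description _ (H i).
  pose Ai i := proj1_sig (s1 i).
  pose s2 i := constructive_indefinite_description _ (proj2_sig (s1 i)).
  pose ai i : Mor (Ai i) N := proj1_sig (s2 i).
  have aiP i : section (ai i) /\ comp c (ai i) = 0 /\
      exists vi : Mor (M i) (Ai i), comp (ai i) vi = comp f (e i)
    := proj2_sig (s2 i).
  pose v i := proj1_sig (constructive_indefinite_description _ (aiP i).2.2).
  have vP i : comp (ai i) (v i) = comp f (e i)
    := proj2_sig (constructive_indefinite_description _ (aiP i).2.2).
  have Hs : section k.
    apply: (sssp I Ai ai).
    + move=> i; exact: (aiP i).1.
    + split.
      * exact: (@kernel_mono _ _ _ _ _ _ kerk).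
      * move=> j. have [u [Hu _]] := kerk.2 _ _ (aiP j).2.1. by exists u.
      * move=> T t tmono Ht.
        pose w j := proj1_sig (constructive_indefinite_description _ (Ht j)).
        have wP j : comp t (w j) = ai j
          := proj2_sig (constructive_indefinite_description _ (Ht j)).
        have [u [Hu _]] := cop T (fun j => comp (w j) (v j)).
        have ftu : comp t u = f.
          have [u0 [_ uniq]] := cop N (fun j => comp f (e j)).
          rewrite -(uniq (comp t u)); last first.
            move=> j. by rewrite -compA Hu compA wP vP.
          exact: uniq.
        have [D [g kert]] := Hmk _ _ t tmono.
        have gf0 : comp g f = 0 by rewrite -ftu compA kert.1 comp0m.
        have [w' [Hw' _]] := cokc.2 _ _ gf0.
        have gk0 : comp g k = 0 by rewrite -Hw' -compA kerk.1 compm0.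
        have [u' [Hu' _]] := kert.2 _ _ gk0. by exists u'.
  case: (Hs) => s sk.
  split.
  + have H0 : comp (idm N - comp k s) k = 0.
      by rewrite compBl comp1m -compA sk compm1 subrr.
    have [r [Hr _]] := cokk.2 _ _ H0.
    exists r. apply: cepi.
    by rewrite -compA Hr compBr compm1 compA kerk.1 comp0m subr0 comp1m.
  + split; first exact: cepi.
    move=> h. have [_ Hfi] := wd _ k Hs.
    have [a Ha] := Hfi h.
    have H0 : comp (comp c h) k = 0 by rewrite -compA Ha compA kerk.1 comp0m.
    have [g [Hg _]] := cokk.2 _ _ H0.
    by exists g.
Qed.

Theorem theorem3p5 (C : precategory) (HC : is_abelian C) :
  (forall (M : C) (I : Type) (N : I -> C) (P : C) (p : forall i, Mor P (N i)),
      weak_duo M -> SSIP M -> is_product p ->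
      (strongly_rickart M P <-> forall i, strongly_rickart M (N i)))
  /\
  (forall (I : Type) (M : I -> C) (S : C) (e : forall i, Mor (M i) S) (N : C),
      is_coproduct e -> weak_duo N -> SSSP N ->
      (dual_strongly_rickart S N <-> forall i, dual_strongly_rickart (M i) N)).
Proof.
split.
- move=> M I N P p; exact: part1.
- move=> I M S e N; exact: part2.
Qed.
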